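(* For every integer $d\ge1$ there is a constant $C>0$ depending only on $d$ such that the following holds. Let $L\in\mathcal A_d$, $\eta>0$, $m\ge d+2$, and let $z_1,\dots,z_m\in B(L,\eta)$. Then there exist distinct indices $i_1,\dots,i_{d+1}\in\{1,\dots,m\}$ and $H\in\mathcal A_d$ containing $z_{i_1},\dots,z_{i_{d+1}}$ (so that $H$ is their affine hull whenever these $d+1$ points are affinely independent) such that $z_1,\dots,z_m\in B(H,C\eta)$.
   Context: $\mathcal A_d$ denotes the set of $d$-dimensional affine subspaces of $\mathbb R^D$. For $A\subset\mathbb R^D$ and $r>0$, $B(A,r)=\{y\in\mathbb R^D:\inf_{a\in A}\|y-a\|<r\}$ (Euclidean norm). *)

(* Defs.v *)
From Stdlib Require Import Reals.
From mathcomp Require Import all_boot.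
Set Implicit Arguments. Unset Strict Implicit. Unset Printing Implicit Defensive.
Local Open Scope R_scope.

Definition vec (D : nat) := 'I_D -> R.

Definition vadd D (x y : vec D) : vec D := fun i => x i + y i.
Definition vsub D (x y : vec D) : vec D := fun i => x i - y i.

Definition enorm D (x : vec D) : R := sqrt (\big[Rplus/0]_(i < D) (x i * x i)).

Definition lincomb D d (t : 'I_d -> R) (v : 'I_d -> vec D) : vec D :=
  fun i => \big[Rplus/0]_(j < d) (t j * v j i).

Definition lin_indep D d (v : 'I_d -> vec D) : Prop :=
  forall t : 'I_d -> R, (forall i, lincomb t v i = 0) -> forall j, t j = 0.

Definition is_affine_d (D d : nat) (A : vec D -> Prop) : Prop :=
  exists (p : vec D) (v : 'I_d -> vec D), lin_indep v /\
    forall x, A x <-> exists t : 'I_d -> R, x = vadd p (lincomb t v).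

(* y \in B(A,r)  :<->  inf_{a in A} ||y - a|| < r, i.e. some a in A has ||y-a|| < r. *)
Definition inB D (A : vec D -> Prop) (r : R) (y : vec D) : Prop :=
  exists a, A a /\ enorm (vsub y a) < r.

(* Main.v *)
Require Import Defs.
From HB Require Import structures.
From Stdlib Require Import Reals Lra ClassicalEpsilon FunctionalExtensionality.
From mathcomp Require Import all_boot all_algebra.
Set Implicit Arguments. Unset Strict Implicit. Unset Printing Implicit Defensive.
Local Open Scope R_scope.

Definition Reqb (x y : R) : bool := if Req_EM_T x y then true else false.
Lemma ReqbP : Equality.axiom Reqb.
Proof. move=> x y; rewrite /Reqb; case: Req_EM_T => h; [by constructor|by constructor]. Qed.
HB.instance Definition _ := hasDecEq.Build R ReqbP.

Definition Rfind (P : pred R) (n : nat) : option R :=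
  match excluded_middle_informative (exists x, P x) with
  | left h => Some (proj1_sig (constructive_indefinite_description _ h))
  | right _ => None end.
Lemma Rfind_correct P n x : Rfind P n = Some x -> P x.
Proof. rewrite /Rfind; case: excluded_middle_informative => // h [<-].
  exact: (proj2_sig (constructive_indefinite_description _ h)). Qed.
Lemma Rfind_complete (P : pred R) : (exists x, P x) -> exists n, Rfind P n.
Proof. move=> h; exists 0%N; rewrite /Rfind; case: excluded_middle_informative => //. Qed.
Lemma Rfind_ext (P Q : pred R) : P =1 Q -> Rfind P =1 Rfind Q.
Proof. move=> h; have -> : P = Q by apply: functional_extensionality. by []. Qed.
HB.instance Definition _ := hasChoice.Build R Rfind_correct Rfind_complete Rfind_ext.

Lemma R_addA : @ssrfun.associative R Rplus. Proof. move=> *; ring. Qed.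
Lemma R_addC : @ssrfun.commutative R R Rplus. Proof. move=> *; ring. Qed.
Lemma R_add0 : @ssrfun.left_id R R 0 Rplus. Proof. move=> *; ring. Qed.
Lemma R_addN : @ssrfun.left_inverse R R R 0 Ropp Rplus. Proof. move=> *; ring. Qed.
HB.instance Definition _ := GRing.isZmodule.Build R R_addA R_addC R_add0 R_addN.
Lemma R_mulA : associative Rmult. Proof. move=> *; ring. Qed.
Lemma R_mulC : commutative Rmult. Proof. move=> *; ring. Qed.
Lemma R_mul1 : left_id 1 Rmult. Proof. move=> *; ring. Qed.
Lemma R_mulD : left_distributive Rmult Rplus. Proof. move=> *; ring. Qed.
Lemma R_10 : 1 != 0 :> R. Proof. apply/eqP; exact R1_neq_R0. Qed.
HB.instance Definition _ := GRing.Zmodule_isComNzRing.Build R R_mulA R_mulC R_mul1 R_mulD R_10.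
Definition Rinvx (x : R) := Rinv x.
Lemma R_mulV (x : R) : x != 0 -> (Rinvx x * x) = 1.
Proof. move/eqP=> h; rewrite /Rinvx; field; exact h. Qed.
Lemma R_inv0 : Rinvx 0 = 0. Proof. exact Rinv_0. Qed.
HB.instance Definition _ := GRing.ComNzRing_isField.Build R R_mulV R_inv0.


Import GRing.Theory.
Section Repl.
Local Open Scope ring_scope.
Variable F : comNzRingType.
Definition repl n (X : 'M[F]_n) (j : 'I_n) (r : 'rV[F]_n) : 'M[F]_n :=
  \matrix_(i, k) (if i == j then r 0 k else X i k).

Lemma cofactor_repl n (X : 'M[F]_n) j r l : cofactor (repl X j r) j l = cofactor X j l.
Proof.
rewrite /cofactor; congr (_ * _); congr (\det _); apply/matrixP => a b.
by rewrite !mxE eq_sym (negPf (neq_lift _ _)).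
Qed.

Lemma det_repl n (X : 'M[F]_n) j r : \det (repl X j r) = \sum_l r 0 l * cofactor X j l.
Proof.
rewrite (expand_det_row _ j); apply: eq_bigr => l _.
by rewrite cofactor_repl !mxE eqxx.
Qed.

Lemma det_repl_row n (X : 'M[F]_n) j i :
  \det (repl X j (row i X)) = if i == j then \det X else 0.
Proof.
case: eqP => [->|/eqP hij].
  by congr (\det _); apply/matrixP => a b; rewrite !mxE; case: eqP => // ->.
apply: (determinant_alternate hij) => k; rewrite !mxE eqxx.
by rewrite (negPf hij).
Qed.

Lemma det_repl_mul n (X : 'M[F]_n) j (s : 'rV[F]_n) :
  \det (repl X j (s *m X)) = s 0 j * \det X.
Proof.
have e1 : \det (repl X j (s *m X)) = \sum_i s 0 i * \det (repl X j (row i X)).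
  rewrite det_repl.
  have -> : \sum_i s 0 i * \det (repl X j (row i X)) =
            \sum_i \sum_l s 0 i * X i l * cofactor X j l.
    apply: eq_bigr => i _; rewrite det_repl big_distrr; apply: eq_bigr => l _.
    by rewrite mxE /= mulrA.
  rewrite exchange_big; apply: eq_bigr => l _; rewrite mxE big_distrl.
  by [].
rewrite e1 (bigD1 j) //= big1 ?addr0; first by rewrite det_repl_row eqxx.
by move=> i /negPf hij; rewrite det_repl_row hij mulr0.
Qed.
End Repl.

Import GRing.Theory.
Section Sel.
Local Open Scope ring_scope.

Lemma seq_argmax (T : eqType) (P : pred T) (f : T -> R) (s : seq T) x0 :
  x0 \in s -> P x0 -> exists x, P x /\ forall y, y \in s -> P y -> Rle (f y) (f x).
Proof.
elim: s x0 => [//|a s IH] x0; rewrite in_cons => hx0 Px0.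
case Pa: (P a); last first.
  case/orP: hx0 => [/eqP ex|hx0]; first by rewrite ex Pa in Px0.
  have [x [Px hx]] := IH x0 hx0 Px0; exists x; split => // y; rewrite in_cons.
  by case/orP => [/eqP -> | ]; [rewrite Pa | exact: hx].
case: (boolP (has P s)) => [/hasP [x1 h1 P1]|hn].
  have [x [Px hx]] := IH x1 h1 P1.
  case: (Rle_dec (f a) (f x)) => h.
    exists x; split => // y; rewrite in_cons; case/orP => [/eqP -> //| ]; exact: hx.
  exists a; split => // y; rewrite in_cons; case/orP => [/eqP -> _ | ys Py].
    exact: Rle_refl.
  apply: Rle_trans (hx y ys Py) _; apply: Rlt_le; exact: Rnot_le_lt.
exists a; split => // y; rewrite in_cons; case/orP => [/eqP -> _ | ys Py].
  exact: Rle_refl.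
by move/hasPn: hn => /(_ y ys); rewrite Py.
Qed.

Lemma fin_argmax (T : finType) (P : pred T) (f : T -> R) x0 :
  P x0 -> exists x, P x /\ forall y, P y -> Rle (f y) (f x).
Proof.
move=> Px0; have [x [Px hx]] := seq_argmax f (mem_enum T x0) Px0.
by exists x; split => // y; apply: hx; rewrite mem_enum.
Qed.

Variables (d m : nat) (i0 : 'I_m) (u : 'I_m -> 'rV[R]_d).

Definition Xm (c : {ffun 'I_d -> 'I_m} * {ffun 'I_d -> bool}) : 'M[R]_d :=
  \matrix_(j, l) (if c.2 j then u (c.1 j) 0 l else (j == l)%:R).
Definition valid (c : {ffun 'I_d -> 'I_m} * {ffun 'I_d -> bool}) :=
  [&& injectiveb c.1, [forall j, c.1 j != i0] & \det (Xm c) != 0].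
Definition cnt (c : {ffun 'I_d -> 'I_m} * {ffun 'I_d -> bool}) := #|[pred j | c.2 j]|.

Lemma select (g0 : 'I_d -> 'I_m) :
  u i0 = 0 -> injective g0 -> (forall j, g0 j != i0) ->
  exists g : 'I_d -> 'I_m, injective g /\ (forall j, g j != i0) /\
    forall k, exists s : 'rV[R]_d, u k = s *m (\matrix_j u (g j)) /\
      forall j, Rle (Rabs (s 0 j)) 1.
Proof.
move=> hu0 ig0 g0i0.
pose c0 := (finfun g0, [ffun _ : 'I_d => false]).
have vc0 : valid c0.
  apply/and3P; split.
  - by apply/injectiveP => x y; rewrite !ffunE; apply: ig0.
  - by apply/forallP => j; rewrite ffunE.
  - have -> : Xm c0 = 1%:M by apply/matrixP => j l; rewrite !mxE ffunE.
    by rewrite det1 oner_neq0.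
case: (@arg_maxnP _ c0 valid cnt vc0) => c1 vc1 hmax1.
have [c [/andP [vc /eqP cc]] hc] :=
  @fin_argmax _ (fun c => valid c && (cnt c == cnt c1)) (fun c => Rabs (\det (Xm c))) c1
    (introT andP (conj vc1 (eqxx _))).
case: c vc cc hc => g b vc cc hc.
case/and3P: vc => /injectiveP ig /forallP gi0 detn0.
exists g; split => //; split => // k.
pose X := Xm (g, b).
have uX : X \in unitmx by rewrite unitmxE unitfE.
case: (eqVneq k i0) => [-> | kni0].
  exists 0; split; first by rewrite mul0mx.
  by move=> j; rewrite mxE Rabs_R0; apply: Rle_0_1.
case: (boolP [exists j', b j' && (g j' == k)]) => [/existsP [j' /andP [bj' /eqP gj']] | hne].
  exists (delta_mx 0 j'); split.
    by rewrite -rowE rowK gj'.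
  move=> j; rewrite mxE; case: (_ && _) => /=.
    rewrite Rabs_R1; exact: Rle_refl.
  rewrite Rabs_R0; exact: Rle_0_1.
have hne' : forall x, b x -> g x != k.
  by move=> x bx; apply/negP => /eqP gx; move/existsP: hne; apply; exists x; rewrite bx gx eqxx.
pose s := u k *m invmx X.
have usX : u k = s *m X by rewrite /s mulmxKV.
clearbody s.
have key : forall j, (~~ b j -> s 0 j = 0) /\ (b j -> Rle (Rabs (s 0 j)) 1).
  move=> j.
  pose g' := [ffun x => if x == j then k else if g x == k then g j else g x].
  pose b' := [ffun x => (x == j) || b x].
  have eX : Xm (g', b') = repl X j (u k).
    apply/matrixP => x l; rewrite !mxE /= !ffunE.
    case: (eqVneq x j) => [-> | xj] //=.
    by case bx: (b x) => //; rewrite (negPf (hne' x bx)).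
  have dX : \det (Xm (g', b')) = s 0 j * \det X by rewrite eX usX det_repl_mul.
  have vc' : s 0 j != 0 -> valid (g', b').
    move=> sn0; apply/and3P; split.
    - apply/injectiveP => x y; rewrite !ffunE.
      case: (eqVneq x j) => [-> | xj]; case: (eqVneq y j) => [-> // | yj].
      + case: (eqVneq (g y) k) => [gyk gjk | gyk ek].
          by move: (ig _ _ (etrans gyk gjk)) yj => ->; rewrite eqxx.
        by move: gyk; rewrite ek eqxx.
      + case: (eqVneq (g x) k) => [gxk gjk | gxk ek].
          by move: (ig _ _ (etrans gxk (esym gjk))) xj => ->; rewrite eqxx.
        by move: gxk; rewrite -ek eqxx.
      + case: (eqVneq (g x) k) => [gxk | gxk]; case: (eqVneq (g y) k) => [gyk | gyk].
        * by move=> _; apply: ig; rewrite gxk gyk.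
        * by move=> e; move: (ig _ _ e) yj => <-; rewrite eqxx.
        * by move=> e; move: (ig _ _ e) xj => ->; rewrite eqxx.
        * exact: ig.
    - apply/forallP => x; rewrite ffunE; case: (x == j) => //.
      by case: (g x == k).
    - by rewrite dX mulf_neq0.
  split.
    move=> nbj; apply/eqP; apply/negPn/negP => sn0.
    have := hmax1 _ (vc' sn0).
    have -> : cnt (g', b') = (cnt (g, b)).+1.
      rewrite /cnt /=.
      rewrite (eq_card (B := [predU1 j & [pred x | b x]])); last first.
        by move=> x; rewrite !inE ffunE.
      by rewrite cardU1 inE nbj.
    rewrite cc => h; move: (leq_ltn_trans h (ltnSn (cnt c1))); by rewrite ltnn.
  move=> bj; case: (eqVneq (s 0 j) 0) => [-> | sn0].
    rewrite Rabs_R0; exact: Rle_0_1.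
  have hb' : b' = b by apply/ffunP => x; rewrite ffunE; case: eqP => // ->.
  have e2 : cnt (g', b') = cnt c1 by rewrite hb' -cc.
  have := hc (g', b'); rewrite vc' //= e2 eqxx => /(_ isT).
  rewrite dX => hle.
  have hpos : Rlt 0 (Rabs (\det X)).
    by apply: Rabs_pos_lt; apply/eqP.
  change (Rle (Rabs (Rmult (s 0 j) (\det X))) (Rabs (\det X))) in hle.
  rewrite Rabs_mult in hle.
  apply: (Rmult_le_reg_r _ _ _ hpos); rewrite Rmult_1_l; exact: hle.
exists s; split.
  rewrite usX; apply/rowP => l; rewrite !mxE; apply: eq_bigr => j _.
  rewrite !mxE; case bj: (b j) => //.
  by rewrite (proj1 (key j)) ?bj // !mul0r.
move=> j; case bj: (b j); first exact: (proj2 (key j)).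
by rewrite (proj1 (key j)) ?bj // Rabs_R0; apply: Rle_0_1.
Qed.
End Sel.

Import GRing.Theory.
Local Open Scope ring_scope.
Lemma convA (x y : R) : x + y = Rplus x y. Proof. by []. Qed.
Lemma convO (x : R) : - x = Ropp x. Proof. by []. Qed.
Lemma convM (x y : R) : x * y = Rmult x y. Proof. by []. Qed.
Lemma zid n (a b c a' b' c' : 'rV[R]_n) :
  (a - b - c) - (a' - b' - c') = (a - a') - (b - b') - (c - c').
Proof.
apply/rowP => i; rewrite !mxE.
have h : forall x y z x' y' z' : R, Rplus (Rplus (Rplus x (Ropp y)) (Ropp z)) (Ropp (Rplus (Rplus x' (Ropp y')) (Ropp z'))) = Rplus (Rplus (Rplus x (Ropp x')) (Ropp (Rplus y (Ropp y')))) (Ropp (Rplus z (Ropp z'))).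
  by move=> *; ring.
exact: h.
Qed.

Definition nsq n (x : 'rV[R]_n) : R := \sum_i x 0 i * x 0 i.

Lemma sum_Rle n (F G : 'I_n -> R) : (forall i, Rle (F i) (G i)) -> Rle (\sum_i F i) (\sum_i G i).
Proof.
move=> h; apply: (big_ind2 (fun a b => Rle a b)) => //; first exact: Rle_refl.
by move=> *; apply: Rplus_le_compat.
Qed.

Lemma sum_ge0 n (F : 'I_n -> R) : (forall i, Rle 0 (F i)) -> Rle 0 (\sum_i F i).
Proof.
move=> h; apply: (big_ind (fun a => Rle 0 a)) => //; first exact: Rle_refl.
move=> a b ha hb; have := Rplus_le_compat _ _ _ _ ha hb; by rewrite Rplus_0_l.
Qed.

Lemma sq_ge0 (x : R) : Rle 0 (x * x). Proof. exact: Rle_0_sqr. Qed.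

Lemma nsq_ge0 n (x : 'rV[R]_n) : Rle 0 (nsq x).
Proof. by apply: sum_ge0 => i; apply: sq_ge0. Qed.

Lemma nsq_eq0 n (x : 'rV[R]_n) : nsq x = 0 -> x = 0.
Proof.
move=> h; apply/rowP => i; rewrite mxE.
have : Rle (x 0 i * x 0 i) (nsq x).
  rewrite /nsq (bigD1 i) //=.
  have hr : Rle 0 (\sum_(j | j != i) x 0 j * x 0 j).
    apply: (big_ind (fun a => Rle 0 a)); first exact: Rle_refl.
      move=> a b ha hb; have := Rplus_le_compat _ _ _ _ ha hb; by rewrite Rplus_0_l.
    by move=> j _; apply: sq_ge0.
  have := Rplus_le_compat_l (x 0 i * x 0 i) _ _ hr.
  by rewrite Rplus_0_r.
rewrite h => hle.
have hge := sq_ge0 (x 0 i).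
have h0 : x 0 i * x 0 i = 0 by apply: Rle_antisym.
by apply: Rsqr_0_uniq.
Qed.

Lemma nsq_mx n (x : 'rV[R]_n) : nsq x = (x *m x^T) 0 0.
Proof. by rewrite mxE; apply: eq_bigr => i _; rewrite mxE. Qed.

Lemma nsq_add2 n (x y : 'rV[R]_n) :
  Rle (nsq (x + y)) (Rplus (Rplus (nsq x) (nsq x)) (Rplus (nsq y) (nsq y))).
Proof.
have -> : Rplus (Rplus (nsq x) (nsq x)) (Rplus (nsq y) (nsq y)) =
   \sum_i (Rplus (Rplus (x 0 i * x 0 i) (x 0 i * x 0 i)) (Rplus (y 0 i * y 0 i) (y 0 i * y 0 i))).
  by rewrite /nsq !big_split.
apply: sum_Rle => i; rewrite mxE.
have h : forall a b : R, Rle (Rmult (Rplus a b) (Rplus a b)) (Rplus (Rplus (Rmult a a) (Rmult a a)) (Rplus (Rmult b b) (Rmult b b))).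
  move=> a b; have := Rle_0_sqr (Rminus a b); rewrite /Rsqr => H; nra.
exact: h.
Qed.

Lemma nsq_scale n (c : R) (x : 'rV[R]_n) : nsq (c *: x) = Rmult (Rmult c c) (nsq x).
Proof.
rewrite /nsq; transitivity ((c * c) * \sum_i x 0 i * x 0 i); last by [].
rewrite mulr_sumr; apply: eq_bigr => i _; rewrite mxE.
have h : forall a b : R, Rmult (Rmult a b) (Rmult a b) = Rmult (Rmult a a) (Rmult b b) by move=> *; ring.
exact: h.
Qed.

Lemma nsq0 n : nsq (0 : 'rV[R]_n) = 0.
Proof. by rewrite /nsq big1 // => i _; rewrite mxE mul0r. Qed.

Lemma nsq_sum_bound n k (y : 'I_n -> 'rV[R]_k) M : Rle 0 M ->
  (forall j, Rle (nsq (y j)) M) -> Rle (nsq (\sum_j y j)) (Rmult (INR (4 ^ n)) M).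
Proof.
elim: n y => [|n IH] y hM hy.
  rewrite big_ord0 nsq0 expn0.
  have -> : INR 1 = 1 by []. by rewrite Rmult_1_l.
rewrite big_ord_recr /=.
have h1 := IH (fun j => y (widen_ord (leqnSn n) j)) hM (fun j => hy _).
have h2 := hy ord_max.
have h3 := nsq_add2 (\sum_(i < n) y (widen_ord (leqnSn n) i)) (y ord_max).
have e4 : INR (4 ^ n.+1) = Rplus (Rplus (INR (4^n)) (INR (4^n))) (Rplus (INR (4^n)) (INR (4^n))).
  by rewrite expnS !mulSn mul0n addn0 !plus_INR; ring.
have h4 : Rle 1 (INR (4 ^ n)).
  have hp : (1 <= 4 ^ n)%coq_nat by apply/leP; rewrite expn_gt0.
  exact: (le_INR 1 (4 ^ n) hp).
rewrite e4.
set a := nsq (\sum_(i < n) y (widen_ord (leqnSn n) i)) in h1 h3 *.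
set K := INR (4 ^ n) in h1 h4 *.
clearbody a K.
have hKM : Rle M (Rmult K M) by nra.
set b := nsq (y ord_max) in h2 h3 *.
set c := nsq (_ + _) in h3 *.
clearbody b c. lra.
Qed.

Lemma gram_unit D d (V : 'M[R]_(d, D)) : row_free V -> V *m V^T \in unitmx.
Proof.
move=> fV; rewrite -row_free_unit; apply: inj_row_free => c hc.
have h : nsq (c *m V) = 0.
  by rewrite nsq_mx trmx_mul mulmxA -(mulmxA c) hc mul0mx mxE.
have /eqP := nsq_eq0 h; rewrite mulmx_free_eq0 //; by move/eqP.
Qed.

Lemma proj_VP D d (V : 'M[R]_(d, D)) : row_free V ->
  V *m (V^T *m invmx (V *m V^T)) = 1%:M.
Proof. by move=> fV; rewrite mulmxA mulmxV // gram_unit. Qed.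

Lemma proj_contract D d (V : 'M[R]_(d, D)) (x : 'rV[R]_D) : row_free V ->
  Rle (nsq (x - x *m (V^T *m invmx (V *m V^T)) *m V)) (nsq x).
Proof.
move=> fV; have uG := gram_unit fV.
set w := x *m _ *m V; set y := x - w.
have yV : y *m V^T = 0.
  rewrite /y /w mulmxBl -!mulmxA mulVmx // mulmx1 subrr //.
have yw : y *m w^T = 0.
  by rewrite /w (trmx_mul (x *m _) V) [y *m _]mulmxA yV mul0mx.
have wy : w *m y^T = 0.
  by have := congr1 trmx yw; rewrite trmx0 trmx_mul trmxK.
have hx : x = y + w by rewrite /y subrK.
clearbody y w; rewrite hx !nsq_mx linearD /= mulmxDl !mulmxDr yw wy addr0 add0r.
have e : (y *m y^T + w *m w^T) 0 0 = Rplus ((y *m y^T) 0 0) ((w *m w^T) 0 0).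
  by rewrite [in LHS]mxE.
rewrite e.
have := nsq_ge0 w; rewrite nsq_mx => hw.
have h : forall a b : R, Rle 0 b -> Rle a (Rplus a b) by move=> *; lra.
exact: h.
Qed.

Lemma extend_free (F : fieldType) d D (A : 'M[F]_(d, D)) : (d <= D)%N ->
  exists B : 'M[F]_(d, D), row_free B /\ (A <= B)%MS.
Proof.
move=> hdD.
exists (pid_mx d *m row_ebase A); split.
  rewrite /row_free mxrankMfree; last by rewrite row_free_unit row_ebase_unit.
  by rewrite rank_pid_mx.
rewrite -{1}(mulmx_ebase A).
have -> : (pid_mx (\rank A) : 'M[F]_(d, D)) = (pid_mx (\rank A) : 'M[F]_(d,d)) *m pid_mx d.
  rewrite mul_pid_mx; congr pid_mx; rewrite (minn_idPl (rank_leq_row A)); apply/esym/minn_idPr; exact: rank_leq_row.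
by rewrite !mulmxA -(mulmxA _ (pid_mx d)) submxMl.
Qed.

Lemma rid1 n (a q : 'rV[R]_n) : a - (a - q) = q.
Proof. apply/rowP => i; rewrite !mxE.
have h : forall x y : R, Rplus x (Ropp (Rplus x (Ropp y))) = y by move=> *; ring.
exact: h. Qed.
Lemma rid2 n (p x y : 'rV[R]_n) : (p + x) - (p + y) = x - y.
Proof. apply/rowP => i; rewrite !mxE.
have h : forall a b c : R, Rplus (Rplus a b) (Ropp (Rplus a c)) = Rplus b (Ropp c) by move=> *; ring.
exact: h. Qed.
Lemma rid3 n (a b c e : 'rV[R]_n) : (a - b) - (c - e) = (a - c) - (b - e).
Proof. apply/rowP => i; rewrite !mxE.
have h : forall a b c e : R, Rplus (Rplus a (Ropp b)) (Ropp (Rplus c (Ropp e))) = Rplus (Rplus a (Ropp c)) (Ropp (Rplus b (Ropp e))) by move=> *; ring.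
exact: h. Qed.
Lemma rid4 n (a b c : 'rV[R]_n) : a - (b + c) = a - b - c.
Proof. apply/rowP => i; rewrite !mxE.
have h : forall a b c : R, Rplus a (Ropp (Rplus b c)) = Rplus (Rplus a (Ropp b)) (Ropp c) by move=> *; ring.
exact: h. Qed.
Lemma rid5 n (q e : 'rV[R]_n) : (q + e) - (q - e) = e + e.
Proof. apply/rowP => i; rewrite !mxE.
have h : forall a b : R, Rplus (Rplus a b) (Ropp (Rplus a (Ropp b))) = Rplus b b by move=> *; ring.
exact: h. Qed.
Lemma rid6 n (a b c e f g : 'rV[R]_n) : (a - (b + c)) - ((e - f) - g) = ((a - e) - (b - f)) - (c - g).
Proof. apply/rowP => i; rewrite !mxE.
have h : forall a b c e f g : R, Rplus (Rplus a (Ropp (Rplus b c))) (Ropp (Rplus (Rplus e (Ropp f)) (Ropp g))) = Rplus (Rplus (Rplus a (Ropp e)) (Ropp (Rplus b (Ropp f)))) (Ropp (Rplus c (Ropp g))) by move=> *; ring.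
exact: h. Qed.
Lemma nsq_opp n (x : 'rV[R]_n) : nsq (- x) = nsq x.
Proof. rewrite /nsq; apply: eq_bigr => i _; rewrite mxE.
have h : forall a : R, Rmult (Ropp a) (Ropp a) = Rmult a a by move=> *; ring.
exact: h. Qed.
Lemma nsq_sub2 n (x y : 'rV[R]_n) :
  Rle (nsq (x - y)) (Rplus (Rplus (nsq x) (nsq x)) (Rplus (nsq y) (nsq y))).
Proof. by have := nsq_add2 x (- y); rewrite nsq_opp. Qed.

Lemma core d D m (V : 'M[R]_(d, D)) (p : 'rV[R]_D) (Z : 'I_m -> 'rV[R]_D)
  (T : 'I_m -> 'rV[R]_d) (eta2 : R) :
  row_free V -> (d + 2 <= m)%N ->
  (forall k, Rlt (nsq (Z k - (p + T k *m V))) eta2) ->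
  exists (i0 : 'I_m) (g : 'I_d -> 'I_m) (B : 'M[R]_(d, D)),
    injective g /\ (forall j, g j != i0) /\ row_free B /\
    (forall j, exists c : 'rV[R]_d, Z (g j) = Z i0 + c *m B) /\
    forall k, exists c : 'rV[R]_d,
      Rlt (nsq (Z k - (Z i0 + c *m B))) (Rmult (INR (8 + 8 * 4 ^ d)) eta2).
Proof.
move=> fV hm hZ.
have m0 : (0 < m)%N by apply: leq_trans hm; rewrite addn2.
pose i0 := Ordinal m0.
pose P := V^T *m invmx (V *m V^T).
have VP : V *m P = 1%:M by exact: proj_VP.
pose u k := (Z k - Z i0) *m P.
have hu0 : u i0 = 0 by rewrite /u subrr mul0mx.
have g0lt : forall j : 'I_d, (j.+1 < m)%N.
  move=> j; apply: leq_trans hm; rewrite addn2 !ltnS; exact: ltnW (ltn_ord j).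
pose g0 j := Ordinal (g0lt j).
have ig0 : injective g0.
  move=> a b /(congr1 val) /= [] /val_inj; done.
have g0i0 : forall j, g0 j != i0 by move=> j; rewrite -val_eqE.
have [g [ig [gi0 hsel]]] := @select d m i0 u g0 hu0 ig0 g0i0.
pose A := \matrix_j (Z (g j) - Z i0) : 'M[R]_(d, D).
have dD : (d <= D)%N by move: (fV); rewrite /row_free => /eqP <-; exact: rank_leq_col.
have [B [fB AB]] := extend_free A dD.
have [M hAB] := submxP AB.
exists i0, g, B; split => //; split => //; split => //; split.
  move=> j; exists (row j M); rewrite -row_mul -hAB rowK.
  by rewrite addrC subrK.
move=> k.
have [s [hus hs1]] := hsel k.
exists (s *m M).
have cB : s *m M *m B = s *m A by rewrite -mulmxA hAB.
rewrite cB.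
pose E x := Z x - (p + T x *m V).
pose EA := \matrix_j (E (g j) - E i0) : 'M[R]_(d, D).
pose TA := \matrix_j (T (g j) - T i0) : 'M[R]_(d, d).
pose err := (E k - E i0) - s *m EA.
set y := Z k - (Z i0 + s *m A).
have AP : A *m P = \matrix_j u (g j).
  by apply/row_matrixP => j; rewrite row_mul !rowK.
have yP : y *m P = 0.
  by rewrite /y rid4 !mulmxBl -mulmxA AP -hus /u mulmxBl subrr.
have ZE : forall x, Z x - E x = p + T x *m V by move=> x; rewrite /E rid1.
have AE : A - EA = TA *m V.
  apply/row_matrixP => j; rewrite row_mul linearB /= !rowK rid3 !ZE rid2.
  by rewrite mulmxBl.
have hq : y - err = ((T k - T i0) - s *m TA) *m V.
  rewrite /y /err rid6 !ZE rid2 -mulmxBr AE.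
  by rewrite mulmxBl mulmxA mulmxBl.
have yeq : y = err - err *m P *m V.
  set q := (T k - T i0) - s *m TA in hq.
  have hy : y = q *m V + err by rewrite -hq subrK.
  have : y - y *m P *m V = err - err *m P *m V.
    rewrite {1 2}hy mulmxDl mulmxDl -(mulmxA q) VP mulmx1.
    by rewrite rid2.
  by rewrite yP mul0mx subr0.
have hy1 : Rle (nsq y) (nsq err) by rewrite yeq; exact: proj_contract.
have heta : Rlt 0 eta2 by apply: Rle_lt_trans (nsq_ge0 _) (hZ k).
have hE : forall x, Rlt (nsq (E x)) eta2 by move=> x; exact: hZ.
have hE2 : forall x, Rlt (nsq (E x - E i0)) (Rmult (INR 4) eta2).
  move=> x; apply: Rle_lt_trans (nsq_sub2 _ _) _.
  have := hE x; have := hE i0.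
  have -> : INR 4 = Rplus (Rplus 1 1) (Rplus 1 1) by rewrite /=; ring.
  move=> *; lra.
have hsum : Rle (nsq (s *m EA)) (Rmult (INR (4 ^ d)) (Rmult (INR 4) eta2)).
  rewrite mulmx_sum_row; apply: nsq_sum_bound.
    by apply: Rlt_le; apply: Rmult_lt_0_compat => //; apply: lt_0_INR; apply/ltP.
  move=> j; rewrite nsq_scale rowK.
  have h1 := hE2 (g j).
  have h2 : Rle (Rmult (s 0 j) (s 0 j)) 1.
    have e : Rmult (s 0 j) (s 0 j) = Rmult (Rabs (s 0 j)) (Rabs (s 0 j)).
      by rewrite -Rabs_mult Rabs_pos_eq //; exact: Rle_0_sqr.
    rewrite e; have := hs1 j; have := Rabs_pos (s 0 j); move=> *; nra.
  have h3 := nsq_ge0 (E (g j) - E i0).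
  have h4 := Rle_0_sqr (s 0 j); rewrite /Rsqr in h4.
  have h5 := Rmult_le_compat_r _ _ _ h3 h2; rewrite Rmult_1_l in h5; exact: (Rle_trans _ _ _ h5 (Rlt_le _ _ h1)).
have herr : Rlt (nsq err) (Rmult (INR (8 + 8 * 4 ^ d)) eta2).
  apply: Rle_lt_trans (nsq_sub2 _ _) _.
  have h1 := hE2 k.
  rewrite plus_INR mult_INR.
  have -> : INR 8 = Rmult (INR 2) (INR 4) by rewrite -mult_INR.
  have -> : INR 2 = Rplus 1 1 by rewrite /=; ring.
  set K := INR (4 ^ d) in hsum *.
  set F := INR 4 in h1 hsum *.
  set a := nsq (E k - E i0) in h1 *.
  set b := nsq (s *m EA) in hsum *.
  nra.
by apply: Rle_lt_trans hy1 herr.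
Qed.

Import GRing.Theory.
Local Open Scope ring_scope.

Definition rv D (x : vec D) : 'rV[R]_D := \row_i x i.

Lemma rv_lincomb D d (t : 'I_d -> R) (v : 'I_d -> vec D) i :
  (\row_j t j *m (\matrix_(j, i) v j i : 'M[R]_(d, D))) 0 i = lincomb t v i.
Proof. by rewrite mxE /lincomb; apply: eq_bigr => j _; rewrite !mxE. Qed.

Lemma enorm_nsq D (x : vec D) : enorm x = sqrt (nsq (rv x)).
Proof. by rewrite /enorm /nsq; congr sqrt; apply: eq_bigr => i _; rewrite !mxE. Qed.

Lemma sqrt_lt_sq (S e : R) : Rle 0 S -> Rle 0 e -> Rlt (sqrt S) e -> Rlt S (Rmult e e).
Proof.
move=> hS he h; rewrite -(sqrt_sqrt S hS).
have := sqrt_pos S => h0; nra.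
Qed.

Lemma sq_lt_sqrt (S e : R) : Rle 0 S -> Rle 0 e -> Rlt S (Rmult e e) -> Rlt (sqrt S) e.
Proof.
move=> hS he h; rewrite -(sqrt_square e he); apply: sqrt_lt_1_alt; split => //.
Qed.

Lemma main_ring : forall d : nat, (1 <= d)%N ->
  exists C : R, Rlt (IZR 0) C /\
  forall (D : nat) (L : vec D -> Prop), is_affine_d d L ->
  forall eta : R, Rlt (IZR 0) eta ->
  forall m : nat, (d + 2 <= m)%N ->
  forall z : 'I_m -> vec D, (forall k, inB L eta (z k)) ->
  exists idx : 'I_(d + 1) -> 'I_m, injective idx /\
  exists H : vec D -> Prop, is_affine_d d H /\
    (forall j, H (z (idx j))) /\
    (forall k, inB H (Rmult C eta) (z k)).
Proof.
move=> d hd.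
have K0 : (0 < 8 + 8 * 4 ^ d)%N by rewrite addn_gt0.
have K1 : Rle 1 (INR (8 + 8 * 4 ^ d)).
  by have := le_INR 1 _ (ltP K0).
exists (INR (8 + 8 * 4 ^ d)); split; first by apply: lt_0_INR; apply/ltP.
move=> D L [p [v [hv hL]]] eta heta m hm z hz.
pose V : 'M[R]_(d, D) := \matrix_(j, i) v j i.
have fV : row_free V.
  apply: inj_row_free => c hc; apply/rowP => j; rewrite mxE.
  have -> : c = \row_j c 0 j by apply/rowP => j'; rewrite mxE.
  rewrite mxE; apply: (hv (fun j => c 0 j)) => i.
  transitivity ((c *m V) 0 i); last by rewrite hc mxE.
  rewrite mxE /lincomb; apply: eq_bigr => j' _; by rewrite !mxE.
pose Z k := rv (z k).
have hT : forall k, exists T : 'rV[R]_d, Rlt (nsq (Z k - (rv p + T *m V))) (Rmult eta eta).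
  move=> k; have [a [ha hda]] := hz k.
  have [t et] := proj1 (hL a) ha.
  exists (\row_j t j).
  have e : nsq (Z k - (rv p + \row_j t j *m V)) = nsq (rv (vsub (z k) a)).
    rewrite /nsq; apply: eq_bigr => i _; rewrite et /rv !mxE /vsub /vadd -rv_lincomb.
    by rewrite !mxE.
  rewrite e; apply: sqrt_lt_sq; [exact: nsq_ge0 | exact: Rlt_le | by rewrite -enorm_nsq].
have [T hTk] := fin_all_exists hT.
have [i0 [g [B [ig [gi0 [fB [hgj hk]]]]]]] := core fV hm hTk.
pose idx (i : 'I_(d + 1)) := if val i is n.+1 then (if insub n is Some j then g j else i0) else i0.
have gn : forall n (hn : (n < d)%N), (if insub n is Some j then g j else i0) = g (Ordinal hn).
  by move=> n hn; rewrite insubT.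
exists idx; split.
  move=> [[|a] ha] [[|b] hb]; rewrite /idx /=.
  - by move=> _; apply: val_inj.
  - have hb' : (b < d)%N by rewrite addn1 ltnS in hb.
    by rewrite gn => e; move: (gi0 (Ordinal hb')); rewrite -e eqxx.
  - have ha' : (a < d)%N by rewrite addn1 ltnS in ha.
    by rewrite gn => e; move: (gi0 (Ordinal ha')); rewrite e eqxx.
  - have ha' : (a < d)%N by rewrite addn1 ltnS in ha.
    have hb' : (b < d)%N by rewrite addn1 ltnS in hb.
    rewrite !gn => /ig [] e; apply: val_inj => /=; by rewrite e.
pose H := fun x : vec D => exists t : 'I_d -> R, x = vadd (z i0) (lincomb t (fun j i => B j i)).
have hmem : forall c : 'rV[R]_d, H (fun i => (Z i0 + c *m B) 0 i).
  move=> c; exists (fun j => c 0 j); apply: functional_extensionality => i.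
  rewrite /vadd !mxE /lincomb; congr Rplus; apply: eq_bigr => j _; by [].
have zZ : forall x, z x = fun i => Z x 0 i.
  by move=> x; apply: functional_extensionality => i; rewrite mxE.
exists H; split.
  exists (z i0), (fun j i => B j i); split => //.
  move=> t ht.
  have h0 : \row_j t j *m B = 0.
    apply/rowP => i; rewrite !mxE -[RHS](ht i) /lincomb; apply: eq_bigr => j _; by rewrite mxE.
  move/eqP: h0; rewrite mulmx_free_eq0 // => /eqP h0 j.
  by have := congr1 (fun M : 'rV[R]_d => M 0 j) h0; rewrite !mxE.
split.
  move=> [[|a] ha]; rewrite /idx /=.
    have := hmem 0; rewrite mul0mx addr0 -zZ; done.
  have ha' : (a < d)%N by rewrite addn1 ltnS in ha.
  rewrite gn; have [c ec] := hgj (Ordinal ha').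
  by rewrite zZ ec; apply: hmem.
move=> k; have [c hc] := hk k.
exists (fun i => (Z i0 + c *m B) 0 i); split; first exact: hmem.
have e : rv (vsub (z k) (fun i => (Z i0 + c *m B) 0 i)) = Z k - (Z i0 + c *m B).
  by apply/rowP => i; rewrite /Z /rv /vsub !mxE.
rewrite enorm_nsq e.
apply: sq_lt_sqrt; first exact: nsq_ge0.
  apply: Rmult_le_pos; [lra | exact: Rlt_le].
apply: Rlt_le_trans hc _.
set K := INR _ in K1 *.
have h2 : Rle 0 (Rmult eta eta) by apply: Rle_0_sqr.
have h3 : Rle K (Rmult K K) by nra.
have := Rmult_le_compat_r _ _ _ h2 h3.
have e2 : Rmult (Rmult K eta) (Rmult K eta) = Rmult (Rmult K K) (Rmult eta eta) by ring.
by rewrite e2.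
Qed.

Local Open Scope R_scope.
Theorem mainTheorem2 :
  forall d : nat, (1 <= d)%N ->
  exists C : R, 0 < C /\
  forall (D : nat) (L : vec D -> Prop), is_affine_d d L ->
  forall eta : R, 0 < eta ->
  forall m : nat, (d + 2 <= m)%N ->
  forall z : 'I_m -> vec D, (forall k, inB L eta (z k)) ->
  exists idx : 'I_(d + 1) -> 'I_m, injective idx /\
  exists H : vec D -> Prop, is_affine_d d H /\
    (forall j, H (z (idx j))) /\
    (forall k, inB H (C * eta) (z k)).
Proof. exact: main_ring. Qed.
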